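(* Fix a slot $t$ and arbitrary values $W(t)\in[0,W_{max}]$, $S(t)\in\mathcal{S}$ and $X(t)\in\mathbb{R}$, and a parameter $V>0$. Consider problem P3 for this slot, with decision variable $P\in[P_{low},P_{high}]$, where $P_{low}=\max[0,W(t)-D_{max}]$, $P_{high}=\min[P_{peak},W(t)+R_{max}]$, and the induced $R=\max(P-W(t),0)$, $D=\max(W(t)-P,0)$. Then every optimal solution $P^*(t)$ of P3 (with induced $R^*(t),D^*(t)$) satisfies: (1) if $X(t)>-V C_{min}$, then $R^*(t)=0$ (i.e. $P^*(t)\le W(t)$); (2) if $X(t)<-V\chi_{min}$, then $D^*(t)=0$ (i.e. $P^*(t)\ge W(t)$).
   Context: Basic model. Time is slotted, $t=0,1,2,\dots$. In slot $t$ the workload (in units of power) is $W(t)\in[0,W_{max}]$. A controller chooses the grid power $P(t)$, the battery recharge amount $R(t)$ and the battery discharge amount $D(t)$ subject to: $W(t)=P(t)-R(t)+D(t)$; $R(t)>0\Rightarrow D(t)=0$ and $D(t)>0\Rightarrow R(t)=0$; $0\le R(t)\le R_{max}$, $0\le D(t)\le D_{max}$; $0\le P(t)\le P_{peak}$, where $P_{peak}\ge W_{max}$. An auxiliary state $S(t)$ takes values in a finite set $\mathcal{S}$. The per-unit price is $C(t)=\hat C(S(t),P(t))$, where for each $s\in\mathcal{S}$ the map $P\mapsto\hat C(s,P)$ is non-negative, finite and non-decreasing on $[0,P_{peak}]$ (not necessarily continuous or convex). $C_{min}$ and $C_{max}$ denote the minimum and maximum of $\hat C(s,P)$ over $s\in\mathcal{S}$,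 $P\in[0,P_{peak}]$. Constants $C_{rc}\ge0$, $C_{dc}\ge0$ are the fixed costs of a recharge and a discharge operation. Indicators: $1_R(t)=1$ if $R(t)>0$ and $0$ otherwise; $1_D(t)=1$ if $D(t)>0$ and $0$ otherwise. The constant $\chi_{min}>0$ is such that for all $P_1\le P_2$ in $[0,P_{peak}]$, all $\chi\ge\chi_{min}$ and all $s\in\mathcal{S}$: $P_1(-\chi+\hat C(s,P_1))\ge P_2(-\chi+\hat C(s,P_2))$; it is assumed that $\chi_{min}>C_{min}$. Problem P3 (for slot $t$, given $W(t),S(t),X(t)$ and $V>0$): minimize $X(t)P+V\big[P\,\hat C(S(t),P)+1_R C_{rc}+1_D C_{dc}\big]$ over $P\in[P_{low},P_{high}]$, where $R=\max(P-W(t),0)$, $D=\max(W(t)-P,0)$, $1_R=1$ iff $P>W(t)$, $1_D=1$ iff $P<W(t)$. *)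

(* Defs.v *)
From Stdlib Require Import Reals Lra List.
Open Scope R_scope.

(* Indicator 1_R : 1 iff R > 0, i.e. P > W; 1_D : 1 iff D > 0, i.e. P < W. *)
Definition ind_R (W P : R) : R := if Rlt_dec W P then 1 else 0.
Definition ind_D (W P : R) : R := if Rlt_dec P W then 1 else 0.

Definition P3_obj {S : Type} (Chat : S -> R -> R) (Crc Cdc V X W : R) (s : S)
  (P : R) : R :=
  X * P + V * (P * Chat s P + ind_R W P * Crc + ind_D W P * Cdc).

Definition P_low (W Dmax : R) : R := Rmax 0 (W - Dmax).
Definition P_high (W Ppeak Rmax_ : R) : R := Rmin Ppeak (W + Rmax_).

Definition P3_optimal {S : Type} (Chat : S -> R -> R)
  (Crc Cdc V X W Ppeak Rmax_ Dmax : R) (s : S) (Pstar : R) : Prop :=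
  P_low W Dmax <= Pstar <= P_high W Ppeak Rmax_ /\
  forall P, P_low W Dmax <= P <= P_high W Ppeak Rmax_ ->
    P3_obj Chat Crc Cdc V X W s Pstar <= P3_obj Chat Crc Cdc V X W s P.

(* Main.v *)
Require Import Defs.
From Stdlib Require Import Reals Lra List.
Open Scope R_scope.

Theorem lemma2
  (S : Type) (Sfin : exists l : list S, forall s : S, In s l)
  (Chat : S -> R -> R)
  (Wmax Ppeak Rmax_ Dmax Crc Cdc Cmin Cmax chimin : R)
  (HRmax : 0 <= Rmax_) (HDmax : 0 <= Dmax)
  (HPpeak : Wmax <= Ppeak) (HWmax : 0 <= Wmax)
  (HCrc : 0 <= Crc) (HCdc : 0 <= Cdc)
  (HCnonneg : forall s P, 0 <= P <= Ppeak -> 0 <= Chat s P)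
  (HCmono : forall s P1 P2, 0 <= P1 -> P1 <= P2 -> P2 <= Ppeak ->
              Chat s P1 <= Chat s P2)
  (HCmin_lb : forall s P, 0 <= P <= Ppeak -> Cmin <= Chat s P)
  (HCmin_att : exists s P, 0 <= P <= Ppeak /\ Chat s P = Cmin)
  (HCmax_ub : forall s P, 0 <= P <= Ppeak -> Chat s P <= Cmax)
  (HCmax_att : exists s P, 0 <= P <= Ppeak /\ Chat s P = Cmax)
  (Hchi_pos : 0 < chimin)
  (Hchi : forall P1 P2 chi s, 0 <= P1 -> P1 <= P2 -> P2 <= Ppeak ->
            chi >= chimin ->
            P1 * (- chi + Chat s P1) >= P2 * (- chi + Chat s P2))
  (Hchi_Cmin : chimin > Cmin)
  (W X V : R) (s : S)
  (HW : 0 <= W <= Wmax) (HV : 0 < V)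
  (Pstar : R)
  (Hopt : P3_optimal Chat Crc Cdc V X W Ppeak Rmax_ Dmax s Pstar) :
  (X > - V * Cmin -> Rmax (Pstar - W) 0 = 0) /\
  (X < - V * chimin -> Rmax (W - Pstar) 0 = 0).
Proof.
  destruct Hopt as [[Hlo Hhi] Hmin].
  unfold P_low, P_high in *.
  assert (HP0 : 0 <= Pstar) by (eapply Rle_trans; [apply Rmax_l|exact Hlo]).
  assert (HPp : Pstar <= Ppeak) by (eapply Rle_trans; [exact Hhi|apply Rmin_l]).
  assert (HWf : Rmax 0 (W - Dmax) <= W <= Rmin Ppeak (W + Rmax_)).
  { split. apply Rmax_lub; lra. apply Rmin_glb; lra. }
  specialize (Hmin W HWf). unfold P3_obj, ind_R, ind_D in Hmin.
  destruct (Rlt_dec W W) as [h|_]; [lra|].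
  split; intro HX.
  - destruct (Rle_dec Pstar W) as [h|h].
    + unfold Rmax; destruct (Rle_dec (Pstar - W) 0); lra.
    + exfalso.
      destruct (Rlt_dec W Pstar) as [_|h']; [|lra].
      destruct (Rlt_dec Pstar W) as [h''|_]; [lra|].
      assert (C1 : Cmin <= Chat s Pstar) by (apply HCmin_lb; lra).
      assert (C2 : Chat s W <= Chat s Pstar) by (apply HCmono; lra).
      assert (E : Pstar * Chat s Pstar - W * Chat s W >= (Pstar - W) * Cmin).
      { assert (0 <= W * (Chat s Pstar - Chat s W)) by (apply Rmult_le_pos; lra).
        assert ((Pstar - W) * Cmin <= (Pstar - W) * Chat s Pstar)
          by (apply Rmult_le_compat_l; lra).
        nra. }
      assert (0 < (Pstar - W) * (X + V * Cmin)) by (apply Rmult_lt_0_compat; lra).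
      assert (V * (Pstar * Chat s Pstar - W * Chat s W) >= V * ((Pstar - W) * Cmin)).
      { apply Rle_ge, Rmult_le_compat_l; lra. }
      assert (0 <= V * Crc) by (apply Rmult_le_pos; lra).
      nra.
  - destruct (Rle_dec W Pstar) as [h|h].
    + unfold Rmax; destruct (Rle_dec (W - Pstar) 0); lra.
    + exfalso.
      destruct (Rlt_dec W Pstar) as [h'|_]; [lra|].
      destruct (Rlt_dec Pstar W) as [_|h'']; [|lra].
      assert (E := Hchi Pstar W chimin s HP0 ltac:(lra) ltac:(lra) ltac:(lra)).
      assert (0 < (W - Pstar) * (- X - V * chimin)) by (apply Rmult_lt_0_compat; lra).
      assert (V * (Pstar * Chat s Pstar - W * Chat s W) >= V * (chimin * (Pstar - W))).
      { apply Rle_ge, Rmult_le_compat_l; lra. }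
      assert (0 <= V * Cdc) by (apply Rmult_le_pos; lra).
      nra.
Qed.
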